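(* Let $\mathcal{P}$ be a poset with at least two elements having the Unique Cover Twin Property, let $n\ge 3$, and let $\mathcal{F}$ be an induced-$\mathcal{P}$-saturated family in $\mathcal{B}_n$. If there exist distinct $x,y\in[n]$ such that no $F\in\mathcal{F}$ satisfies $|F\cap\{x,y\}|=1$, then $F\cap\{x,y\}=\emptyset$ for all $F\in\mathcal{F}$.
   Context: In a poset $(P,\le)$, $y$ covers $x$ if $x<y$ and there is no $z$ with $x<z<y$. A poset $\mathcal{P}=(P,\le)$ has the Unique Cover Twin Property (UCTP) if for every $S\in P$ that has exactly one cover $T\in P$, there exists $S'\in P$ with $S'\ne S$ such that $T$ also covers $S'$. $\mathcal{B}_n$ denotes the Boolean lattice $(2^{[n]},\subseteq)$. A family $\mathcal{F}\subseteq 2^{[n]}$ (ordered by inclusion) is induced-$\mathcal{P}$-saturated if it contains no induced copy of $\mathcal{P}$ (an injection $f$ with $u\le v\iff f(u)\subseteq f(v)$) but every family $\mathcal{F}'$ with $\mathcal{F}\subsetneq\mathcal{F}'\subseteq 2^{[n]}$ contains one. *)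

(* Defs.v *)
From mathcomp Require Import all_boot all_order.
Set Implicit Arguments. Unset Strict Implicit. Unset Printing Implicit Defensive.
Import Order.Theory.
Local Open Scope order_scope.

Definition covers (d : Order.disp_t) (P : finPOrderType d) (x y : P) : bool :=
  (x < y) && [forall z : P, ~~ ((x < z) && (z < y))].

Definition UCTP (d : Order.disp_t) (P : finPOrderType d) : Prop :=
  forall S T : P,
    covers S T -> (forall T' : P, covers S T' -> T' = T) ->
    exists S' : P, S' != S /\ covers S' T.

Definition contains_induced (d : Order.disp_t) (P : finPOrderType d) (n : nat)
    (F : {set {set 'I_n}}) : Prop :=
  exists f : P -> {set 'I_n},
    [/\ injective f, (forall u, f u \in F) &
        (forall u v : P, (u <= v) <-> (f u \subset f v))].

Definition induced_saturated (d : Order.disp_t) (P : finPOrderType d) (n : nat)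
    (F : {set {set 'I_n}}) : Prop :=
  ~ contains_induced P F /\
  (forall F' : {set {set 'I_n}}, F \proper F' -> contains_induced P F').

(* Main.v *)
Require Import Defs.
From mathcomp Require Import all_boot all_order.

Section Helpers.
Import Order.Theory.
Local Open Scope order_scope.

Lemma I2 (T : finType) (B : {set T}) (a b : T) :
  a != b -> a \in B -> b \notin B -> B :&: [set a; b] = [set a].
Proof.
move=> ab ha hb; apply/setP => z; rewrite !inE.
case: (eqVneq z a) => [->|za]; first by rewrite ha.
case: (eqVneq z b) => [->|_]; by rewrite ?(negbTE hb) ?andbF.
Qed.
Arguments I2 {T B a b}.

Lemma key d (P : finPOrderType d) n (F : {set {set 'I_n}}) (x y : 'I_n) :
  UCTP P -> induced_saturated P F -> x != y ->
  (forall B, B \in F -> #|B :&: [set x; y]| != 1) ->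
  forall A0, A0 \in F -> x \in A0 -> y \in A0 -> False.
Proof.
move=> uctp [nocp sat] xy hF A0 A0F xA0 yA0.
pose S := [set B in F | (x \in B) && (y \in B)].
have A0S : A0 \in S by rewrite /S inE A0F xA0 yA0.
case: (arg_minnP (fun B : {set 'I_n} => #|B|) A0S) => A AS Amin.
have AS2 : A \in S by []. move: AS2; rewrite /S inE => /andP [AF /andP [xA yA]].
have yx : y != x by rewrite eq_sym.
have xy' : forall B, B \in F -> x \in B -> y \in B.
  move=> B BF xB; apply/negPn/negP => yB.
  by have := hF B BF; rewrite (I2 xy xB yB) cards1.
have yx' : forall B, B \in F -> y \in B -> x \in B.
  move=> B BF yB; apply/negPn/negP => xB.
  have := hF B BF; rewrite (_ : [set x; y] = [set y; x]); last by rewrite setUC.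
  by rewrite (I2 yx yB xB) cards1.
pose G := A :\ y.
have xG : x \in G by rewrite !inE xy xA.
have GnF : G \notin F.
  apply/negP => GF; have := xy' G GF xG; by rewrite !inE eqxx.
have prop : F \proper G |: F.
  rewrite properE subsetUr /=; apply/negP => /subsetP h.
  by have := h G; rewrite setU11 (negbTE GnF) => /(_ isT).
case: (sat _ prop) => f [finj fin ford].
have fordb : forall u v, (u <= v) = (f u \subset f v).
  by move=> u v; apply/idP/idP => /(ford u v).
have fin' : forall v, f v != G -> f v \in F.
  move=> v; have := fin v; rewrite in_setU1 => /orP[/eqP->|//]; by rewrite eqxx.
have [u0 fu0] : exists u0, f u0 = G.
  case: (pickP (fun u => f u == G)) => [u0 /eqP fu0|none]; first by exists u0.
  exfalso; apply nocp; exists f; split=>// v; apply fin'; by rewrite none.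
have neq_u0 : forall v, v != u0 -> f v != G.
  move=> v; apply: contra => /eqP h; apply/eqP; apply finj; by rewrite h fu0.
have GA : G \subset A by apply/subsetP => z; rewrite !inE => /andP[].
have upG : forall v, v != u0 -> (G \subset f v) = (A \subset f v).
  move=> v vu; apply/idP/idP => h.
  - have fvF := fin' v (neq_u0 v vu).
    have xfv : x \in f v by apply (subsetP h).
    have yfv := xy' _ fvF xfv.
    apply/subsetP => z zA; case: (eqVneq z y) => [->//|zy].
    by apply (subsetP h); rewrite !inE zy zA.
  - exact: subset_trans GA h.
have upu0 : forall v, v != u0 -> (u0 <= v) <-> (A \subset f v).
  move=> v vu; rewrite -upG // -fu0; apply ford.
case: (pickP (fun t => f t == A)) => [t /eqP ft | none]; last first.
  apply nocp; exists (fun v => if v == u0 then A else f v); split.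
  - move=> v1 v2 /=.
    case: (eqVneq v1 u0) => [->|v1u]; case: (eqVneq v2 u0) => [->|v2u] //.
    + move=> h; have := none v2; by rewrite -h eqxx.
    + move=> h; have := none v1; by rewrite h eqxx.
    + exact: finj.
  - move=> v; case: (eqVneq v u0) => [_|vu] //=; exact: fin' _ (neq_u0 _ vu).
  - move=> u v /=.
    case: (eqVneq u u0) => [->|uu]; case: (eqVneq v u0) => [->|vu].
    + by split=> _; [exact: subxx | exact: lexx].
    + exact: upu0.
    + rewrite fordb fu0; split => h; first exact: subset_trans h GA.
      apply/subsetP => z zfu; rewrite !inE; apply/andP; split; last exact: (subsetP h z zfu).
      apply/negP => /eqP zy; rewrite zy in zfu.
      have fuF := fin' u (neq_u0 u uu).
      have xfu := yx' _ fuF zfu.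
      have fuS : f u \in S by rewrite /S inE fuF xfu zfu.
      have : f u == A by rewrite eqEcard h (Amin _ fuS).
      by rewrite none.
    + exact: ford.
have tu : t != u0.
  apply/eqP => e; have : y \in f t by rewrite ft.
  by rewrite e fu0 !inE eqxx.
have upt : forall v, v != u0 -> (u0 <= v) <-> (t <= v).
  move=> v vu; apply: iff_trans (upu0 v vu) _; rewrite -ft -fordb; done.
have u0t : u0 < t by rewrite lt_neqAle eq_sym tu /=; apply (upt t tu).2; exact: lexx.
have cov : covers u0 t.
  rewrite /covers u0t /=; apply/forallP => z; apply/negP => /andP [u0z zt].
  have zu : z != u0 by rewrite eq_sym (lt_eqF u0z).
  have := (upt z zu).1 (ltW u0z); by rewrite (lt_geF zt).
have uniqc : forall T', covers u0 T' -> T' = t.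
  move=> T' /andP [u0T /forallP hT].
  have Tu : T' != u0 by rewrite eq_sym (lt_eqF u0T).
  have := (upt T' Tu).1 (ltW u0T); rewrite le_eqVlt => /orP [/eqP //|tT].
  by have := hT t; rewrite u0t tT.
case: (uctp _ _ cov uniqc) => S' [S'u /andP [S't /forallP hS]].
have S'neq_t : S' != t by rewrite (lt_eqF S't).
have fS'F := fin' S' (neq_u0 _ S'u).
have fS'A : f S' \subset A by rewrite -ft -fordb; exact: ltW S't.
have yS : y \notin f S'.
  apply/negP => yS; have xS := yx' _ fS'F yS.
  have fSS : f S' \in S by rewrite /S inE fS'F xS yS.
  have : f S' == A by rewrite eqEcard fS'A (Amin _ fSS).
  rewrite -ft => /eqP /finj e; by rewrite e eqxx in S'neq_t.
have S'u0 : S' <= u0.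
  rewrite fordb fu0; apply/subsetP => z zS; rewrite !inE (subsetP fS'A z zS) andbT.
  apply/negP => /eqP e; rewrite e in zS; by rewrite zS in yS.
by have := hS u0; rewrite lt_neqAle S'u S'u0 u0t.
Qed.

End Helpers.
Arguments I2 {T B a b}.

Theorem lemma3p7 (d : Order.disp_t) (P : finPOrderType d) (n : nat)
    (F : {set {set 'I_n}}) (x y : 'I_n) :
  1 < #|P| -> UCTP P -> 3 <= n -> induced_saturated P F ->
  x != y ->
  (forall A, A \in F -> #|A :&: [set x; y]| != 1) ->
  forall A, A \in F -> A :&: [set x; y] = set0.
Proof.
move=> _ uctp _ sat xy hF A AF.
case xA: (x \in A); case yA: (y \in A).
- by exfalso; exact: (@key _ _ _ _ _ _ uctp sat xy hF A AF xA yA).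
- by have := hF A AF; rewrite (I2 xy xA (negbT yA)) cards1.
- have yx : y != x by rewrite eq_sym.
  have := hF A AF; rewrite (_ : [set x; y] = [set y; x]); last by rewrite setUC.
  by rewrite (I2 yx yA (negbT xA)) cards1.
- apply/setP => z; rewrite !inE.
  case: (eqVneq z x) => [->|_]; first by rewrite xA.
  case: (eqVneq z y) => [->|_]; first by rewrite yA.
  by rewrite andbF.
Qed.
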